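(* Let $\mathbf{x}=(\mathbf{x}_1,\mathbf{x}_2,\mathbf{x}_3)$ have i.i.d. Bernoulli$(0.5)$ coordinates, and let $\mathbf{y}$ be distributed as follows: if $\mathbf{x}_3=1$, $\mathbf{y}=\mathbf{x}_1$ with probability $0.9$ and $\mathbf{y}=1-\mathbf{x}_1$ otherwise; if $\mathbf{x}_3=0$, $\mathbf{y}=\mathbf{x}_2$ with probability $0.9$ and $\mathbf{y}=1-\mathbf{x}_2$ otherwise. Let $e_{\mathrm{encode}}(\mathbf{x})=\xi_1=[1,0,0]$ if $\mathbf{x}_3=1$ and $e_{\mathrm{encode}}(\mathbf{x})=\xi_2=[0,1,0]$ otherwise. Then ROAR and FRESH both assign their respective optimal scores to $e_{\mathrm{encode}}$; that is, $\mathbf{y}$ is independent of $\mathbf{x}_{-e_{\mathrm{encode}}(\mathbf{x})}$, and $q(\mathbf{y}\mid \mathrm{val}(\mathbf{x}_{e_{\mathrm{encode}}(\mathbf{x})}))=q(\mathbf{y}\mid\mathbf{x})$ almost surely.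
   Context: An explanation is a map $e:\{0,1\}^3\to\{0,1\}^3$ selecting coordinates; the explanation $\mathbf{x}_{e(\mathbf{x})}=(\mathbf{v},\mathbf{a})$ consists of the selection $\mathbf{v}=e(\mathbf{x})$ and the values $\mathbf{a}$ of the selected coordinates. $\mathbf{x}_{-e(\mathbf{x})}$ denotes the pair of the complementary mask $\mathbf{1}-e(\mathbf{x})$ and the values of the unselected coordinates. ROAR scores an explanation by how poorly $\mathbf{x}_{-e(\mathbf{x})}$ predicts $\mathbf{y}$, and assigns its optimal score exactly when $\mathbf{y}$ is independent of $\mathbf{x}_{-e(\mathbf{x})}$. $\mathrm{val}(\mathbf{x}_{e(\mathbf{x})})$ is the vector in which the selected values $\mathbf{a}$ are placed in order in the first $\sum_i\mathbf{v}_i$ positions and the remaining positions are filled with a padding token (so the positions of the selected coordinates are dropped). FRESH scores an explanation by how well $\mathrm{val}(\mathbf{x}_{e(\mathbf{x})})$ predicts $\mathbf{y}$, and assigns its optimal score when this prediction is as good as that of $q(\mathbf{y}\mid\mathbf{x})$, i.e. $q(\mathbf{y}\mid\mathrm{val}(\mathbf{x}_{e(\mathbf{x})}))=q(\mathbf{y}\mid\mathbf{x})$. *)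

(* Defs.v *)
From mathcomp Require Import all_boot all_order all_algebra.
Set Implicit Arguments. Unset Strict Implicit. Unset Printing Implicit Defensive.
Import Order.TTheory GRing.Theory Num.Theory.
Local Open Scope ring_scope.

(* inputs x in {0,1}^3 (coordinates indexed 0,1,2 = paper's 1,2,3), labels y in {0,1} *)
Definition inp := {ffun 'I_3 -> bool}.
Definition mask := {ffun 'I_3 -> bool}.
(* a "masked vector": Some value at the listed coordinates, None elsewhere/padding *)
Definition pvec := {ffun 'I_3 -> option bool}.


Definition Pr {R : numDomainType} (p : inp * bool -> R) (A : pred (inp * bool)) : R :=
  \sum_(w : inp * bool | A w) p w.

Definition bern_half {R : numFieldType} (b : bool) : R := 1 / 2.
Definition pjoint {R : numFieldType} (w : inp * bool) : R :=
  let x := w.1 in let y := w.2 in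
  bern_half (x ord0) * bern_half (x (inord 1)) * bern_half (x (inord 2)) *
  (let src := if x (inord 2) then x ord0 else x (inord 1) in
   if y == src then 9 / 10 else 1 / 10).

Definition xi1 : mask := [ffun i : 'I_3 => val i == 0%N].
Definition xi2 : mask := [ffun i : 'I_3 => val i == 1%N].
Definition e_encode (x : inp) : mask := if x (inord 2) then xi1 else xi2.

Definition restrict (v : mask) (x : inp) : pvec :=
  [ffun i => if v i then Some (x i) else None].
Definition maskC (v : mask) : mask := [ffun i => ~~ v i].

(* x_{e(x)} = (v, a) and x_{-e(x)} = (1 - v, values of unselected coordinates) *)
Definition expl (e : inp -> mask) (x : inp) : mask * pvec :=
  (e x, restrict (e x) x).
Definition expl_compl (e : inp -> mask) (x : inp) : mask * pvec :=
  (maskC (e x), restrict (maskC (e x)) x).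

(* val(x_{e(x)}): selected values in order in the first positions, padding (None) after *)
Definition valE (va : mask * pvec) : pvec :=
  let s := [seq va.2 i | i <- enum 'I_3 & va.1 i] in
  [ffun i : 'I_3 => nth None s i].

Definition indep_y {R : numDomainType} {T : eqType} (p : inp * bool -> R)
  (f : inp -> T) : Prop :=
  forall (t : T) (b : bool),
    Pr p (fun w => (f w.1 == t) && (w.2 == b))
    = Pr p (fun w => f w.1 == t) * Pr p (fun w => w.2 == b).

Definition cond_y {R : numFieldType} {T : eqType} (p : inp * bool -> R)
  (g : inp -> T) (x0 : inp) (b : bool) : R :=
  Pr p (fun w => (g w.1 == g x0) && (w.2 == b)) / Pr p (fun w => g w.1 == g x0).

(* Main.v *)
Require Import Defs.
From mathcomp Require Import all_boot all_order all_algebra.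
From mathcomp Require Import ring lra.
Import GRing.Theory Num.Theory.
Local Open Scope ring_scope.

Definition mk (a b c : bool) : inp := [ffun i : 'I_3 => nth false [:: a; b; c] i].

Lemma vi1 : nat_of_ord (inord 1 : 'I_3) = 1%N. Proof. by rewrite inordK. Qed.
Lemma vi2 : nat_of_ord (inord 2 : 'I_3) = 2%N. Proof. by rewrite inordK. Qed.

Lemma vi1' : val (inord 1 : 'I_3) = 1%N. Proof. exact: vi1. Qed.
Lemma vi2' : val (inord 2 : 'I_3) = 2%N. Proof. exact: vi2. Qed.

Lemma ord3P (i : 'I_3) : [\/ i = ord0, i = inord 1 | i = inord 2].
Proof.
case: i => [[|[|[|m]]] H].
- by apply: Or31; apply: val_inj.
- by apply: Or32; apply: val_inj; rewrite /= vi1.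
- by apply: Or33; apply: val_inj; rewrite /= vi2.
- by [].
Qed.

Lemma ffeq3 (T : eqType) (f g : {ffun 'I_3 -> T}) :
  (f == g) = [&& f ord0 == g ord0, f (inord 1) == g (inord 1) & f (inord 2) == g (inord 2)].
Proof.
apply/eqP/and3P => [-> //|[/eqP h0 /eqP h1 /eqP h2]].
by apply/ffunP => i; case: (ord3P i) => ->.
Qed.

Lemma enum3 : enum 'I_3 = [:: ord0; inord 1; inord 2].
Proof.
apply: (inj_map val_inj); rewrite val_enum_ord /= vi1 vi2 //.
Qed.

Lemma mk_surj (x : inp) : exists a b c, x = mk a b c.
Proof.
exists (x ord0), (x (inord 1)), (x (inord 2)).
apply/ffunP => i; rewrite ffunE; case: (ord3P i) => ->; by rewrite ?vi1 ?vi2.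
Qed.

Lemma sum_pair (R : nmodType) (A B : finType) (F : A * B -> R) :
  \sum_(p : A * B) F p = \sum_(a : A) \sum_(b : B) F (a, b).
Proof. by rewrite pair_big; apply: eq_bigr => -[]. Qed.

Lemma sum_inp (R : nmodType) (F : inp -> R) :
  \sum_(x : inp) F x = \sum_(a : bool) \sum_(b : bool) \sum_(c : bool) F (mk a b c).
Proof.
pose h := fun t : bool * bool * bool => mk t.1.1 t.1.2 t.2.
pose g := fun x : inp => (x ord0, x (inord 1), x (inord 2)).
rewrite (reindex h).
  by rewrite sum_pair sum_pair.
exists g => [[[a b] c] _|x _].
  by rewrite /g /h !ffunE /= ?vi1 ?vi2.
have [a [b [c ->]]] := mk_surj x.
by rewrite /g /h !ffunE /= ?vi1 ?vi2.
Qed.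

Lemma PrE (R : numDomainType) (p : inp * bool -> R) (A : pred (inp * bool)) :
  Pr p A = \sum_(a : bool) \sum_(b : bool) \sum_(c : bool)
     ((if A (mk a b c, true) then p (mk a b c, true) else 0) +
      (if A (mk a b c, false) then p (mk a b c, false) else 0)).
Proof.
rewrite /Pr big_mkcond sum_pair sum_inp.
by under eq_bigr do under eq_bigr do under eq_bigr do rewrite big_bool.
Qed.


Lemma mk0 a b c : mk a b c ord0 = a. Proof. by rewrite ffunE. Qed.
Lemma mk1 a b c : mk a b c (inord 1) = b. Proof. by rewrite ffunE -[val _]/(nat_of_ord _) vi1. Qed.
Lemma mk2 a b c : mk a b c (inord 2) = c. Proof. by rewrite ffunE -[val _]/(nat_of_ord _) vi2. Qed.
Lemma xi10 : xi1 ord0 = true. Proof. by rewrite ffunE. Qed.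
Lemma xi11 : xi1 (inord 1) = false. Proof. by rewrite ffunE -[val _]/(nat_of_ord _) vi1. Qed.
Lemma xi12 : xi1 (inord 2) = false. Proof. by rewrite ffunE -[val _]/(nat_of_ord _) vi2. Qed.
Lemma xi20 : xi2 ord0 = false. Proof. by rewrite ffunE. Qed.
Lemma xi21 : xi2 (inord 1) = true. Proof. by rewrite ffunE -[val _]/(nat_of_ord _) vi1. Qed.
Lemma xi22 : xi2 (inord 2) = false. Proof. by rewrite ffunE -[val _]/(nat_of_ord _) vi2. Qed.

Lemma L1 (x x' : inp) : (expl_compl e_encode x == expl_compl e_encode x') =
  (x (inord 2) == x' (inord 2)) &&
  (if x (inord 2) then x (inord 1) == x' (inord 1) else x ord0 == x' ord0).
Proof.
rewrite /expl_compl /e_encode /restrict /maskC xpair_eqE !ffeq3 !ffunE.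
case: (x (inord 2)); case: (x' (inord 2));
  rewrite ?xi10 ?xi11 ?xi12 ?xi20 ?xi21 ?xi22 /= ?andbT //.
Qed.

Lemma L2 (x x' : inp) : (valE (expl e_encode x) == valE (expl e_encode x')) =
  ((if x (inord 2) then x ord0 else x (inord 1)) ==
   (if x' (inord 2) then x' ord0 else x' (inord 1))).
Proof.
rewrite /valE /expl /e_encode /restrict ffeq3 !ffunE /= enum3 /=.
case: (x (inord 2)); case: (x' (inord 2));
  rewrite /= ?xi10 ?xi11 ?xi12 ?xi20 ?xi21 ?xi22 /= !ffunE ?xi10 ?xi11 ?xi12 ?xi20 ?xi21 ?xi22 /= ?vi1 ?vi2 ?vi1' ?vi2' /= ?andbT //.
Qed.

Lemma pjointE (R : numFieldType) (x : inp) (y : bool) : @pjoint R (x, y) =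
  1 / 2 * (1 / 2) * (1 / 2) *
  (if y == (if x (inord 2) then x ord0 else x (inord 1)) then 9 / 10 else 1 / 10).
Proof. by []. Qed.

Lemma part1 (R : realFieldType) : indep_y (@pjoint R) (expl_compl e_encode).
Proof.
move=> t b.
case: (pickP (fun x => expl_compl e_encode x == t)) => [x0 /eqP <- | H]; last first.
  have Z1 : Pr (@pjoint R) (fun w => (expl_compl e_encode w.1 == t) && (w.2 == b)) = 0.
    by rewrite /Pr big1 // => w; have /= Hw := H w.1; rewrite Hw.
  have Z2 : Pr (@pjoint R) (fun w => (expl_compl e_encode w.1 == t)) = 0.
    by rewrite /Pr big1 // => w; have /= Hw := H w.1; rewrite Hw.
  by rewrite Z1 Z2 mul0r.
have [a [b' [c ->]]] := mk_surj x0.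
rewrite !PrE !big_bool !L1 !pjointE !mk0 !mk1 !mk2.
Time case: a; case: b'; case: c; case: b => /=.
Time all: lra.
Qed.

Lemma part2 (R : realFieldType) (x : inp) (b : bool) :
     cond_y (@pjoint R) (fun x' => valE (expl e_encode x')) x b
     = cond_y (@pjoint R) id x b.
Proof.
have [a [b' [c ->]]] := mk_surj x.
rewrite /cond_y !PrE !big_bool !L2 /id !ffeq3 !pjointE !mk0 !mk1 !mk2.
Time case: a; case: b'; case: c; case: b => /=.
Time all: by field.
Qed.

Theorem proposition1 (R : realFieldType) :
  (* ROAR optimal: y independent of x_{-e_encode(x)} *)
  indep_y (@pjoint R) (expl_compl e_encode) /\
  (* FRESH optimal: q(y | val(x_{e(x)})) = q(y | x) almost surely *)
  (forall (x : inp) (b : bool),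
     0 < Pr (@pjoint R) (fun w => w.1 == x) ->
     cond_y (@pjoint R) (fun x' => valE (expl e_encode x')) x b
     = cond_y (@pjoint R) id x b).
Proof.
split; first exact: part1.
by move=> x b _; exact: part2.
Qed.
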